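(* Let $\alpha_1,\alpha_2,\alpha_3,\epsilon_1,\epsilon_2,\epsilon_3,f_1,f_2,f_3$ be real parameters and consider the system on $\mathbb{R}^3$ \[ \frac{dq_i}{dt} = q_i\Big(f_i + \sum_{j=1}^3 \beta_{ij} q_j\Big),\qquad i=1,2,3, \qquad \beta = -\begin{bmatrix}\epsilon_1 & \alpha_1 & \alpha_1\\ \alpha_2 & \epsilon_2 & \alpha_2\\ \alpha_3 & \alpha_3 & \epsilon_3\end{bmatrix}. \] If this system has a non-constant first integral that is analytic at the origin $q=0$, then $f_1,f_2,f_3$ are linearly dependent over the non-negative integers, i.e. there exist $n_1,n_2,n_3\in\mathbb{Z}_{\ge 0}$, not all zero, with $n_1f_1+n_2f_2+n_3f_3=0$.
   Context: A first integral is a function $I(q_1,q_2,q_3)$ that is constant along all solutions of the system. This system is the three-firm Cournot oligopoly with gradient adjustment, after rescaling time by the demand slope $b$, with $f_i=\frac{\alpha_i}{b}(a-d_i)$ and $\epsilon_i=\frac{2\alpha_i}{b}(b+e_i)$, where $\alpha_i$ are adjustment speeds, $a$ the demand intercept and $d_i,e_i$ the linear and quadratic cost coefficients. *)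

(* Defs.v *)
From Stdlib Require Import Reals.
From Coquelicot Require Import Coquelicot.
Open Scope R_scope.

Definition beta (a1 a2 a3 e1 e2 e3 : R) (i j : nat) : R :=
  match i, j with
  | 1%nat, 1%nat => - e1 | 1%nat, _ => - a1
  | 2%nat, 2%nat => - e2 | 2%nat, _ => - a2
  | 3%nat, 3%nat => - e3 | 3%nat, _ => - a3
  | _, _ => 0
  end.

Definition field (a1 a2 a3 e1 e2 e3 fi : R) (i : nat) (q1 q2 q3 : R) : R :=
  let b := beta a1 a2 a3 e1 e2 e3 in
  (match i with 1%nat => q1 | 2%nat => q2 | _ => q3 end) *
  (fi + (b i 1%nat * q1 + b i 2%nat * q2 + b i 3%nat * q3)).

Definition in_box (r x y z : R) : Prop := Rabs x < r /\ Rabs y < r /\ Rabs z < r.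

(* Degree-n homogeneous part of the triple power series with coefficients c. *)
Definition psum3 (c : nat -> nat -> nat -> R) (x y z : R) (n : nat) : R :=
  sum_f_R0 (fun i => sum_f_R0 (fun j =>
     c i j (n - i - j)%nat * x ^ i * y ^ j * z ^ (n - i - j)) (n - i)) n.

Definition psum3_abs (c : nat -> nat -> nat -> R) (x y z : R) (n : nat) : R :=
  sum_f_R0 (fun i => sum_f_R0 (fun j =>
     Rabs (c i j (n - i - j)%nat * x ^ i * y ^ j * z ^ (n - i - j))) (n - i)) n.

Definition analytic_on_box (I : R -> R -> R -> R) (r : R) : Prop :=
  0 < r /\ exists c : nat -> nat -> nat -> R,
    forall x y z, in_box r x y z ->
      ex_series (psum3_abs c x y z) /\ is_series (psum3 c x y z) (I x y z).

Definition solution_on (a1 a2 a3 e1 e2 e3 f1 f2 f3 r : R)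
  (q1 q2 q3 : R -> R) (t0 t1 : R) : Prop :=
  forall t, t0 <= t <= t1 ->
    in_box r (q1 t) (q2 t) (q3 t) /\
    is_derive q1 t (field a1 a2 a3 e1 e2 e3 f1 1 (q1 t) (q2 t) (q3 t)) /\
    is_derive q2 t (field a1 a2 a3 e1 e2 e3 f2 2 (q1 t) (q2 t) (q3 t)) /\
    is_derive q3 t (field a1 a2 a3 e1 e2 e3 f3 3 (q1 t) (q2 t) (q3 t)).

Definition first_integral_on_box (a1 a2 a3 e1 e2 e3 f1 f2 f3 r : R)
  (I : R -> R -> R -> R) : Prop :=
  forall (q1 q2 q3 : R -> R) (t0 t1 : R), t0 <= t1 ->
    solution_on a1 a2 a3 e1 e2 e3 f1 f2 f3 r q1 q2 q3 t0 t1 ->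
    I (q1 t0) (q2 t0) (q3 t0) = I (q1 t1) (q2 t1) (q3 t1).

Definition nonconstant_on_box (I : R -> R -> R -> R) (r : R) : Prop :=
  exists x y z x' y' z', in_box r x y z /\ in_box r x' y' z' /\
    I x y z <> I x' y' z'.

(* Main.v *)
Require Import Defs.
From Stdlib Require Import Reals Lra Lia Psatz Classical.
From Coquelicot Require Import Coquelicot.
Open Scope R_scope.


Definition step (F : nat -> R) (b : nat -> nat -> R) (s : R)
  (h : nat -> nat -> R) (k i : nat) : R :=
  (F i * h k i + s * (b i 1%nat * PS_mult (fun l => h l i) (fun l => h l 1%nat) k
                    + b i 2%nat * PS_mult (fun l => h l i) (fun l => h l 2%nat) k
                    + b i 3%nat * PS_mult (fun l => h l i) (fun l => h l 3%nat) k))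
  / INR (S k).

Fixpoint Hh (F U : nat -> R) (b : nat -> nat -> R) (s : R) (k : nat)
  : nat -> nat -> R :=
  match k with
  | O => fun _ i => U i
  | S k' => fun l i => if (l <=? k')%nat then Hh F U b s k' l i
                       else step F b s (Hh F U b s k') k' i
  end.

Definition cf F U b s (k i : nat) : R := Hh F U b s k k i.

Lemma Hh_stable F U b s : forall k l i, (l <= k)%nat -> Hh F U b s k l i = cf F U b s l i.
Proof.
  induction k as [|k IH]; intros l i Hl.
  - assert (l = 0)%nat by lia. subst. reflexivity.
  - simpl. destruct (Nat.leb_spec l k).
    + apply IH; lia.
    + assert (l = S k) by lia. subst. unfold cf. cbn [Hh]. destruct (Nat.leb_spec (S k) k); [lia|reflexivity].
Qed.

Lemma cf_0 F U b s i : cf F U b s 0 i = U i.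
Proof. reflexivity. Qed.

Lemma cf_S F U b s k i : cf F U b s (S k) i = step F b s (cf F U b s) k i.
Proof.
  unfold cf at 1. cbn [Hh]. destruct (Nat.leb_spec (S k) k); [lia|]. unfold step.
  rewrite (Hh_stable F U b s k k i) by lia.
  unfold PS_mult.
  assert (E : forall j, sum_f_R0 (fun l => Hh F U b s k l i * Hh F U b s k (k - l)%nat j) k
     = sum_f_R0 (fun l => cf F U b s l i * cf F U b s (k - l)%nat j) k).
  { intro j. apply sum_eq. intros l Hl. rewrite !Hh_stable by lia. reflexivity. }
  rewrite !E.
  reflexivity.
Qed.

Lemma conv_bound (a c : nat -> R) (B : R) k :
  0 <= B -> (forall l, (l <= k)%nat -> Rabs (a l) <= B ^ l) ->
  (forall l, (l <= k)%nat -> Rabs (c l) <= B ^ l) ->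
  Rabs (PS_mult a c k) <= INR (S k) * B ^ k.
Proof.
  intros HB Ha Hc. unfold PS_mult.
  eapply Rle_trans; [apply sum_f_R0_triangle|].
  rewrite Rmult_comm, <- sum_cte. apply sum_Rle. intros l Hl.
  rewrite Rabs_mult.
  replace (B ^ k) with (B ^ l * B ^ (k - l)) by (rewrite <- pow_add; f_equal; lia).
  apply Rmult_le_compat; try apply Rabs_pos; [apply Ha|apply Hc]; lia.
Qed.

Lemma cf_bound F U b s Fm bm :
  0 <= s <= 1 -> 0 <= Fm -> 0 <= bm ->
  (forall i, Rabs (F i) <= Fm) -> (forall i j, Rabs (b i j) <= bm) ->
  (forall i, Rabs (U i) <= 1) ->
  forall k i, Rabs (cf F U b s k i) <= (Fm + 3 * bm + 1) ^ k.
Proof.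
  intros Hs HF Hb HFi Hbi HU.
  set (B := Fm + 3 * bm + 1).
  assert (HB : 1 <= B) by (unfold B; lra).
  assert (H : forall k, forall l i, (l <= k)%nat -> Rabs (cf F U b s l i) <= B ^ l).
  { induction k as [|k IH]; intros l i Hl.
    - assert (l = 0)%nat by lia; subst. rewrite cf_0. simpl. apply HU.
    - destruct (Nat.leb_spec l k). { apply IH; lia. }
      assert (l = S k) by lia; subst l.
      rewrite cf_S. unfold step.
      assert (Hk : 0 < INR (S k)) by (apply lt_0_INR; lia).
      assert (Hm : forall j, Rabs (PS_mult (fun l => cf F U b s l i) (fun l => cf F U b s l j) k)
                   <= INR (S k) * B ^ k).
      { intro j. apply conv_bound; [lra| |]; intros; apply IH; lia. }
      assert (HBk : 0 <= B ^ k) by (apply pow_le; lra).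
      set (P1 := PS_mult _ _ k) in *. set (P2 := PS_mult _ (fun l => cf F U b s l 2%nat) k).
      set (P3 := PS_mult _ (fun l => cf F U b s l 3%nat) k).
      pose proof (Hm 1%nat) as H1. pose proof (Hm 2%nat) as H2. pose proof (Hm 3%nat) as H3.
      fold P1 P2 P3 in H1, H2, H3.
      unfold Rdiv. rewrite Rabs_mult, Rabs_inv, (Rabs_right (INR (S k))) by lra.
      apply (Rmult_le_reg_r (INR (S k))); [lra|].
      rewrite Rmult_assoc, Rinv_l, Rmult_1_r by lra.
      assert (Hc : Rabs (cf F U b s k i) <= B ^ k) by (apply IH; lia).
      assert (Hk1 : 1 <= INR (S k)) by (apply (le_INR 1); lia).
      assert (Hb1 : forall j P, Rabs P <= INR (S k) * B ^ k -> Rabs (b i j * P) <= bm * (INR (S k) * B ^ k)).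
      { intros j P HP. rewrite Rabs_mult. apply Rmult_le_compat; try apply Rabs_pos; auto. }
      pose proof (Hb1 1%nat _ H1). pose proof (Hb1 2%nat _ H2). pose proof (Hb1 3%nat _ H3).
      assert (HFc : Rabs (F i * cf F U b s k i) <= Fm * B ^ k).
      { rewrite Rabs_mult. apply Rmult_le_compat; try apply Rabs_pos; auto. }
      eapply Rle_trans; [apply Rabs_triang|].
      eapply Rle_trans; [apply Rplus_le_compat; [apply HFc|]|].
      { rewrite Rabs_mult. apply Rmult_le_compat_l; [apply Rabs_pos|].
        eapply Rle_trans; [apply Rabs_triang|].
        apply Rplus_le_compat; [|eassumption].
        eapply Rle_trans; [apply Rabs_triang|].
        apply Rplus_le_compat; eassumption. }
      rewrite (Rabs_right s) by lra. simpl pow.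
      assert (0 <= Fm * B ^ k) by (apply Rmult_le_pos; lra).
      assert (Fm * B ^ k <= Fm * B ^ k * INR (S k)).
      { rewrite <- (Rmult_1_r (Fm * B ^ k)) at 1. apply Rmult_le_compat_l; lra. }
      assert (0 <= bm * B ^ k * INR (S k)) by (apply Rmult_le_pos; [apply Rmult_le_pos|]; lra).
      assert (s * (bm * (INR (S k) * B ^ k) + bm * (INR (S k) * B ^ k) + bm * (INR (S k) * B ^ k))
              <= 3 * bm * B^k * INR (S k)).
      { replace (s * (bm * (INR (S k) * B ^ k) + bm * (INR (S k) * B ^ k) + bm * (INR (S k) * B ^ k)))
          with (s * (3 * (bm * B ^ k * INR (S k)))) by ring.
        replace (3 * bm * B^k * INR (S k)) with (1 * (3 * (bm * B ^ k * INR (S k)))) by ring.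
        apply Rmult_le_compat_r; lra. }
      idtac.
      assert (EB : B * B ^ k * INR (S k) = Fm * B ^ k * INR (S k) + 3 * bm * B ^ k * INR (S k) + B ^ k * INR (S k)).
      { unfold B at 1. ring. }
      assert (0 <= B ^ k * INR (S k)) by (apply Rmult_le_pos; lra).
      lra. }
  intros k0 i. apply (H k0); lia.
Qed.

Lemma cf_approx F U b s Fm bm :
  0 <= s <= 1 -> 0 <= Fm -> 0 <= bm ->
  (forall i, Rabs (F i) <= Fm) -> (forall i j, Rabs (b i j) <= bm) ->
  (forall i, Rabs (U i) <= 1) ->
  forall k i, Rabs (cf F U b s k i - U i * F i ^ k / INR (Factorial.fact k))
     <= s * (Fm + 3 * bm + 1) ^ k.
Proof.
  intros Hs HF Hb HFi Hbi HU.
  pose proof (cf_bound F U b s Fm bm Hs HF Hb HFi Hbi HU) as Hcf.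
  set (B := Fm + 3 * bm + 1) in *.
  assert (HB : 1 <= B) by (unfold B; lra).
  induction k as [|k IH]; intro i.
  - rewrite cf_0. simpl. replace (U i - U i * 1 / 1) with 0 by field.
    rewrite Rabs_R0. lra.
  - rewrite cf_S. unfold step.
    assert (Hk : 0 < INR (S k)) by (apply lt_0_INR; lia).
    assert (Hfk : 0 < INR (Factorial.fact k)) by (apply lt_0_INR; apply Factorial.lt_O_fact).
    assert (Hm : forall j, Rabs (PS_mult (fun l => cf F U b s l i) (fun l => cf F U b s l j) k)
                   <= INR (S k) * B ^ k).
    { intro j. apply conv_bound; [lra| |]; intros; apply Hcf. }
    assert (HBk : 0 <= B ^ k) by (apply pow_le; lra).
    set (P1 := PS_mult _ _ k) in *. set (P2 := PS_mult _ (fun l => cf F U b s l 2%nat) k).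
    set (P3 := PS_mult _ (fun l => cf F U b s l 3%nat) k).
    pose proof (Hm 1%nat) as H1. pose proof (Hm 2%nat) as H2. pose proof (Hm 3%nat) as H3.
    fold P1 P2 P3 in H1, H2, H3.
    specialize (IH i). set (d := cf F U b s k i - U i * F i ^ k / INR (Factorial.fact k)) in IH.
    replace ((F i * cf F U b s k i + s * (b i 1%nat * P1 + b i 2%nat * P2 + b i 3%nat * P3)) / INR (S k)
              - U i * F i ^ S k / INR (Factorial.fact (S k)))
      with ((F i * d + s * (b i 1%nat * P1 + b i 2%nat * P2 + b i 3%nat * P3)) / INR (S k)).
    2:{ unfold d. rewrite fact_simpl, mult_INR. simpl pow. field. lra. }
    unfold Rdiv. rewrite Rabs_mult, Rabs_inv, (Rabs_right (INR (S k))) by lra.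
    apply (Rmult_le_reg_r (INR (S k))); [lra|].
    rewrite Rmult_assoc, Rinv_l, Rmult_1_r by lra.
    assert (Hk1 : 1 <= INR (S k)) by (apply (le_INR 1); lia).
    assert (Hb1 : forall j P, Rabs P <= INR (S k) * B ^ k -> Rabs (b i j * P) <= bm * (INR (S k) * B ^ k)).
    { intros j P HP. rewrite Rabs_mult. apply Rmult_le_compat; try apply Rabs_pos; auto. }
    pose proof (Hb1 1%nat _ H1). pose proof (Hb1 2%nat _ H2). pose proof (Hb1 3%nat _ H3).
    assert (HFc : Rabs (F i * d) <= Fm * (s * B ^ k)).
    { rewrite Rabs_mult. apply Rmult_le_compat; try apply Rabs_pos; auto. }
    eapply Rle_trans; [apply Rabs_triang|].
    eapply Rle_trans; [apply Rplus_le_compat; [apply HFc|]|].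
    { rewrite Rabs_mult. apply Rmult_le_compat_l; [apply Rabs_pos|].
      eapply Rle_trans; [apply Rabs_triang|].
      apply Rplus_le_compat; [|eassumption].
      eapply Rle_trans; [apply Rabs_triang|].
      apply Rplus_le_compat; eassumption. }
    rewrite (Rabs_right s) by lra. simpl pow.
    assert (0 <= Fm * (s * B ^ k)) by (apply Rmult_le_pos; [lra|apply Rmult_le_pos]; lra).
    assert (Fm * (s * B ^ k) <= Fm * (s * B ^ k) * INR (S k)).
    { rewrite <- (Rmult_1_r (Fm * (s * B ^ k))) at 1. apply Rmult_le_compat_l; lra. }
    assert (EB : s * (B * B ^ k) * INR (S k) =
       Fm * (s * B ^ k) * INR (S k) + s * (bm * (INR (S k) * B ^ k) + bm * (INR (S k) * B ^ k) +
   bm * (INR (S k) * B ^ k)) + s * B ^ k * INR (S k)).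
    { unfold B at 1. ring. }
    assert (0 <= s * B ^ k * INR (S k)).
    { apply Rmult_le_pos; [apply Rmult_le_pos|]; lra. }
    lra.
Qed.


Lemma term_bound (a : nat -> R) c B t k : 1 <= B -> 0 <= c ->
  (forall k, Rabs (a k) <= c * B ^ k) -> Rabs t <= / (2 * B) ->
  Rabs (a k * t ^ k) <= c * (/ 2) ^ k.
Proof.
  intros HB Hc Ha Ht. rewrite Rabs_mult, <- RPow_abs.
  replace (c * (/2) ^ k) with ((c * B ^ k) * (/ (2 * B)) ^ k).
  2:{ assert (E: B^k * (/B)^k = 1) by (rewrite <- Rpow_mult_distr, Rinv_r, pow1; lra).
        rewrite Rinv_mult, Rpow_mult_distr.
        replace (c*B^k*((/2)^k*(/B)^k)) with (c*(/2)^k*(B^k*(/B)^k)) by ring. rewrite E; ring. }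
  apply Rmult_le_compat; try apply Rabs_pos; try apply pow_le; try apply Rabs_pos; auto. apply pow_incr; split; auto; apply Rabs_pos.
Qed.

Lemma geo_bound (a : nat -> R) c B t : 1 <= B -> 0 <= c ->
  (forall k, Rabs (a k) <= c * B ^ k) -> Rabs t <= / (2 * B) ->
  ex_series (fun k => Rabs (a k * t ^ k)) /\ Rabs (PSeries a t) <= 2 * c.
Proof.
  intros HB Hc Ha Ht.
  assert (Hg : ex_series (fun k => c * (/2) ^ k)).
  { apply (ex_series_ext (fun k => (/2)^k * c)); [intro; simpl; ring|]. apply ex_series_scal_r. apply ex_series_geom. rewrite Rabs_right; lra. }
  assert (Hex : ex_series (fun k => Rabs (a k * t ^ k))).
  { eapply (@ex_series_le R_AbsRing R_CompleteNormedModule); [|exact Hg]. intro n. change (norm (Rabs (a n * t ^ n))) with (Rabs (Rabs (a n * t ^ n))).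
    rewrite Rabs_Rabsolu. apply term_bound with B; auto. }
  split; auto.
  unfold PSeries. eapply Rle_trans; [apply Series_Rabs; auto|].
  eapply Rle_trans; [apply Series_le; [|exact Hg]|].
  - intro n. split; [apply Rabs_pos|]. apply term_bound with B; auto.
  - rewrite Series_scal_l, Series_geom by (rewrite Rabs_right; lra). lra.
Qed.

Lemma radius_bound (a : nat -> R) c B t : 1 <= B -> 0 <= c ->
  (forall k, Rabs (a k) <= c * B ^ k) -> Rabs t <= / (2 * B) ->
  Rbar_lt (Rabs t) (CV_radius a).
Proof.
  intros HB Hc Ha Ht.
  assert (H : Rbar_le (/ B) (CV_radius a)).
  { apply (proj1 (CV_radius_bounded a)). exists c. intro n.
    rewrite Rabs_mult, <- RPow_abs, (Rabs_right (/ B)) by (apply Rgt_ge, Rinv_0_lt_compat; lra).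
    rewrite pow_inv. apply (Rmult_le_reg_r (B ^ n)). apply pow_lt; lra.
    rewrite Rmult_assoc, Rinv_l by (apply pow_nonzero; lra). rewrite Rmult_1_r. apply Ha. }
  eapply Rbar_lt_le_trans; [|exact H]. simpl.
  eapply Rle_lt_trans; [exact Ht|]. apply Rinv_lt_contravar; nra.
Qed.


Lemma ex_ps_conv (a : nat -> R) x : ex_pseries a x -> ex_series (fun k => a k * x ^ k).
Proof.
  apply ex_series_ext. intro n. rewrite pow_n_pow. apply Rmult_comm.
Qed.

Lemma deriv_w F U b s Fm bm t i :
  0 <= s <= 1 -> 0 <= Fm -> 0 <= bm ->
  (forall i, Rabs (F i) <= Fm) -> (forall i j, Rabs (b i j) <= bm) ->
  (forall i, Rabs (U i) <= 1) ->
  Rabs t <= / (2 * (Fm + 3 * bm + 1)) ->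
  is_derive (PSeries (fun k => cf F U b s k i)) t
    (PSeries (fun k => cf F U b s k i) t *
     (F i + s * (b i 1%nat * PSeries (fun k => cf F U b s k 1%nat) t
               + b i 2%nat * PSeries (fun k => cf F U b s k 2%nat) t
               + b i 3%nat * PSeries (fun k => cf F U b s k 3%nat) t))).
Proof.
  intros Hs HF Hb HFi Hbi HU Ht.
  set (B := Fm + 3 * bm + 1) in *.
  assert (HB : 1 <= B) by (unfold B; lra).
  assert (Hbd : forall j k, Rabs (cf F U b s k j) <= 1 * B ^ k).
  { intros j k. rewrite Rmult_1_l. apply (cf_bound F U b s Fm bm); auto. }
  assert (Hr : forall j, Rbar_lt (Rabs t) (CV_radius (fun k => cf F U b s k j))).
  { intro j. apply radius_bound with 1 B; auto; lra. }
  set (a := fun j k => cf F U b s k j).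
  change (fun k => cf F U b s k i) with (a i).
  change (fun k => cf F U b s k 1%nat) with (a 1%nat).
  change (fun k => cf F U b s k 2%nat) with (a 2%nat).
  change (fun k => cf F U b s k 3%nat) with (a 3%nat).
  change (fun k => cf F U b s k 3%nat) with (a 3%nat) in Hr.
  assert (Hr' : forall j, Rbar_lt (Rabs t) (CV_radius (a j))) by exact Hr.
  assert (Hex : forall j, ex_series (fun k => a j k * t ^ k)).
  { intro j. apply ex_ps_conv, CV_radius_inside, Hr'. }
  assert (Hexm : forall j, ex_series (fun k => PS_mult (a i) (a j) k * t ^ k)).
  { intro j. apply ex_ps_conv, ex_pseries_mult; apply Hr'. }
  assert (Hd : forall n, PS_derive (a i) n = F i * a i n + s * (b i 1%nat * PS_mult (a i) (a 1%nat) n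
        + b i 2%nat * PS_mult (a i) (a 2%nat) n + b i 3%nat * PS_mult (a i) (a 3%nat) n)).
  { intro n. unfold PS_derive, a. rewrite cf_S. unfold step. field.
    apply not_0_INR. lia. }
  eapply is_derive_ext; [intro; reflexivity|].
  replace (PSeries (a i) t * (F i + s * (b i 1%nat * PSeries (a 1%nat) t + b i 2%nat * PSeries (a 2%nat) t +
     b i 3%nat * PSeries (a 3%nat) t)))
    with (PSeries (PS_derive (a i)) t).
  { apply is_derive_PSeries. apply Hr'. }
  rewrite (PSeries_ext _ _ _ Hd).
  match goal with |- _ = ?R => transitivity (F i * PSeries (a i) t + s * (b i 1%nat * (PSeries (a i) t * PSeries (a 1%nat) t)
     + b i 2%nat * (PSeries (a i) t * PSeries (a 2%nat) t) + b i 3%nat * (PSeries (a i) t * PSeries (a 3%nat) t))); [|ring] end.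
  rewrite <- !PSeries_mult by apply Hr'.
  unfold PSeries.
  rewrite (Series_ext _ (fun n => F i * (a i n * t ^ n) + s * (b i 1%nat * (PS_mult (a i) (a 1%nat) n * t ^ n)
     + b i 2%nat * (PS_mult (a i) (a 2%nat) n * t ^ n) + b i 3%nat * (PS_mult (a i) (a 3%nat) n * t ^ n))))
    by (intro; ring).
  assert (E1 : forall j, ex_series (fun n => b i j * (PS_mult (a i) (a j) n * t ^ n))).
  { intro j. apply (ex_series_ext (fun n => (PS_mult (a i) (a j) n * t ^ n) * b i j)); [intro; simpl; ring|].
    apply ex_series_scal_r, Hexm. }
  assert (E0 : ex_series (fun n => F i * (a i n * t ^ n))).
  { apply (ex_series_ext (fun n => (a i n * t ^ n) * F i)); [intro; simpl; ring|].
    apply ex_series_scal_r, Hex. }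
  rewrite Series_plus; [| exact E0 |].
  2:{ apply (ex_series_ext (fun n => (b i 1%nat * (PS_mult (a i) (a 1%nat) n * t ^ n) +
      b i 2%nat * (PS_mult (a i) (a 2%nat) n * t ^ n) + b i 3%nat * (PS_mult (a i) (a 3%nat) n * t ^ n)) * s));
      [intro; simpl; ring|].
    apply ex_series_scal_r. apply (ex_series_plus (V := R_NormedModule)); [apply (ex_series_plus (V := R_NormedModule))|]; apply E1. }
  rewrite Series_scal_l, Series_scal_l.
  rewrite Series_plus; [|apply (ex_series_plus (V := R_NormedModule)); apply E1| apply E1].
  rewrite Series_plus by apply E1.
  rewrite !Series_scal_l. ring.
Qed.


Definition sel (x1 x2 x3 : R) (i : nat) : R :=
  match i with 1%nat => x1 | 2%nat => x2 | _ => x3 end.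

Lemma exp_series U F T :
  is_series (fun k => U * F ^ k / INR (Factorial.fact k) * T ^ k) (U * exp (F * T)).
Proof.
  pose proof (is_exp_Reals (F * T)) as H. unfold is_pseries in H.
  apply (is_series_scal_l (K := R_AbsRing) (V := R_NormedModule) U) in H.
  eapply is_series_ext; [|exact H]. intro n. simpl. rewrite pow_n_pow, Rpow_mult_distr.
  change (scal U (scal (F ^ n * T ^ n) (/ INR (Factorial.fact n)))) with
    (U * ((F ^ n * T ^ n) * / INR (Factorial.fact n))).
  unfold Rdiv. ring.
Qed.

Lemma approx_w F U b s Fm bm T i :
  0 <= s <= 1 -> 0 <= Fm -> 0 <= bm ->
  (forall i, Rabs (F i) <= Fm) -> (forall i j, Rabs (b i j) <= bm) ->
  (forall i, Rabs (U i) <= 1) ->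
  Rabs T <= / (2 * (Fm + 3 * bm + 1)) ->
  Rabs (PSeries (fun k => cf F U b s k i) T - U i * exp (F i * T)) <= 2 * s.
Proof.
  intros Hs HF Hb HFi Hbi HU Ht.
  set (B := Fm + 3 * bm + 1) in *.
  assert (HB : 1 <= B) by (unfold B; lra).
  pose proof (exp_series (U i) (F i) T) as He.
  assert (Hd : forall k, Rabs (cf F U b s k i - U i * F i ^ k / INR (Factorial.fact k)) <= s * B ^ k).
  { intro k. apply (cf_approx F U b s Fm bm); auto. }
  destruct (geo_bound _ s B T HB (proj1 Hs) Hd Ht) as [Hex Hbd].
  rewrite <- (is_series_unique _ _ He).
  assert (Ha : ex_series (fun k => cf F U b s k i * T ^ k)).
  { apply ex_series_Rabs.
    assert (Hbd' : forall k, Rabs (cf F U b s k i) <= 1 * B ^ k).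
    { intros k. rewrite Rmult_1_l. apply (cf_bound F U b s Fm bm); auto. }
    destruct (geo_bound _ 1 B T HB ltac:(lra) Hbd' Ht) as [H1 _]. exact H1. }
  unfold PSeries. rewrite <- Series_minus; [|exact Ha|eexists; exact He].
  eapply Rle_trans; [|exact Hbd]. unfold PSeries. right. f_equal. apply Series_ext. intro n. ring.
Qed.


Definition wsol (a1 a2 a3 e1 e2 e3 f1 f2 f3 s u1 u2 u3 : R) (i : nat) (t : R) : R :=
  PSeries (fun k => cf (sel f1 f2 f3) (sel u1 u2 u3) (beta a1 a2 a3 e1 e2 e3) s k i) t.

Definition Fm3 (f1 f2 f3 : R) := Rabs f1 + Rabs f2 + Rabs f3.
Definition bm3 (a1 a2 a3 e1 e2 e3 : R) :=
  Rabs a1 + Rabs a2 + Rabs a3 + Rabs e1 + Rabs e2 + Rabs e3.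
Definition Tm (a1 a2 a3 e1 e2 e3 f1 f2 f3 : R) :=
  / (2 * (Fm3 f1 f2 f3 + 3 * bm3 a1 a2 a3 e1 e2 e3 + 1)).

Lemma Fm3_bound f1 f2 f3 i : Rabs (sel f1 f2 f3 i) <= Fm3 f1 f2 f3.
Proof.
  unfold Fm3, sel. pose proof (Rabs_pos f1). pose proof (Rabs_pos f2). pose proof (Rabs_pos f3).
  destruct i as [|[|[|]]]; lra.
Qed.

Lemma bm3_bound a1 a2 a3 e1 e2 e3 i j :
  Rabs (beta a1 a2 a3 e1 e2 e3 i j) <= bm3 a1 a2 a3 e1 e2 e3.
Proof.
  unfold bm3, beta.
  pose proof (Rabs_pos a1). pose proof (Rabs_pos a2). pose proof (Rabs_pos a3).
  pose proof (Rabs_pos e1). pose proof (Rabs_pos e2). pose proof (Rabs_pos e3).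
  destruct i as [|[|[|[|]]]]; try (rewrite Rabs_R0; lra);
  destruct j as [|[|[|[|]]]]; rewrite ?Rabs_Ropp; lra.
Qed.

Lemma Fm3_pos f1 f2 f3 : 0 <= Fm3 f1 f2 f3.
Proof. unfold Fm3. pose proof (Rabs_pos f1). pose proof (Rabs_pos f2). pose proof (Rabs_pos f3). lra. Qed.
Lemma bm3_pos a1 a2 a3 e1 e2 e3 : 0 <= bm3 a1 a2 a3 e1 e2 e3.
Proof. unfold bm3.
  pose proof (Rabs_pos a1). pose proof (Rabs_pos a2). pose proof (Rabs_pos a3).
  pose proof (Rabs_pos e1). pose proof (Rabs_pos e2). pose proof (Rabs_pos e3). lra. Qed.

Lemma Tm_pos a1 a2 a3 e1 e2 e3 f1 f2 f3 : 0 < Tm a1 a2 a3 e1 e2 e3 f1 f2 f3.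
Proof. unfold Tm. pose proof (Fm3_pos f1 f2 f3). pose proof (bm3_pos a1 a2 a3 e1 e2 e3).
  apply Rinv_0_lt_compat. lra. Qed.

Lemma sel_bound u1 u2 u3 i : Rabs u1 <= 1 -> Rabs u2 <= 1 -> Rabs u3 <= 1 -> Rabs (sel u1 u2 u3 i) <= 1.
Proof. intros; destruct i as [|[|[|]]]; simpl; auto. Qed.

Lemma wsol_bound a1 a2 a3 e1 e2 e3 f1 f2 f3 s u1 u2 u3 i t :
  0 <= s <= 1 -> Rabs u1 <= 1 -> Rabs u2 <= 1 -> Rabs u3 <= 1 ->
  Rabs t <= Tm a1 a2 a3 e1 e2 e3 f1 f2 f3 ->
  Rabs (wsol a1 a2 a3 e1 e2 e3 f1 f2 f3 s u1 u2 u3 i t) <= 2.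
Proof.
  intros Hs H1 H2 H3 Ht. unfold wsol.
  pose proof (Fm3_pos f1 f2 f3). pose proof (bm3_pos a1 a2 a3 e1 e2 e3).
  assert (Hbd' : forall k, Rabs (cf (sel f1 f2 f3) (sel u1 u2 u3) (beta a1 a2 a3 e1 e2 e3) s k i)
      <= 1 * (Fm3 f1 f2 f3 + 3 * bm3 a1 a2 a3 e1 e2 e3 + 1) ^ k).
  { intros k. rewrite Rmult_1_l. apply cf_bound; auto using Fm3_bound, bm3_bound, sel_bound. }
  assert (HB1 : 1 <= Fm3 f1 f2 f3 + 3 * bm3 a1 a2 a3 e1 e2 e3 + 1) by lra.
  destruct (geo_bound _ 1 _ t HB1 ltac:(lra) Hbd' Ht) as [_ Hb]. lra.
Qed.

Lemma wsol_approx a1 a2 a3 e1 e2 e3 f1 f2 f3 s u1 u2 u3 i :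
  0 <= s <= 1 -> Rabs u1 <= 1 -> Rabs u2 <= 1 -> Rabs u3 <= 1 ->
  Rabs (wsol a1 a2 a3 e1 e2 e3 f1 f2 f3 s u1 u2 u3 i (Tm a1 a2 a3 e1 e2 e3 f1 f2 f3)
        - sel u1 u2 u3 i * exp (sel f1 f2 f3 i * Tm a1 a2 a3 e1 e2 e3 f1 f2 f3)) <= 2 * s.
Proof.
  intros Hs H1 H2 H3. unfold wsol.
  pose proof (Fm3_pos f1 f2 f3). pose proof (bm3_pos a1 a2 a3 e1 e2 e3).
  apply (approx_w _ _ _ s (Fm3 f1 f2 f3) (bm3 a1 a2 a3 e1 e2 e3)); auto using Fm3_bound, bm3_bound, sel_bound.
  rewrite Rabs_right. right; reflexivity. left. apply Tm_pos.
Qed.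

Lemma wsol_0 a1 a2 a3 e1 e2 e3 f1 f2 f3 s u1 u2 u3 i :
  wsol a1 a2 a3 e1 e2 e3 f1 f2 f3 s u1 u2 u3 i 0 = sel u1 u2 u3 i.
Proof. unfold wsol. rewrite PSeries_0. reflexivity. Qed.

Lemma wsol_solution a1 a2 a3 e1 e2 e3 f1 f2 f3 r s u1 u2 u3 :
  0 < s <= 1 -> 2 * s < r -> Rabs u1 <= 1 -> Rabs u2 <= 1 -> Rabs u3 <= 1 ->
  solution_on a1 a2 a3 e1 e2 e3 f1 f2 f3 r
    (fun t => s * wsol a1 a2 a3 e1 e2 e3 f1 f2 f3 s u1 u2 u3 1%nat t)
    (fun t => s * wsol a1 a2 a3 e1 e2 e3 f1 f2 f3 s u1 u2 u3 2%nat t)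
    (fun t => s * wsol a1 a2 a3 e1 e2 e3 f1 f2 f3 s u1 u2 u3 3%nat t)
    0 (Tm a1 a2 a3 e1 e2 e3 f1 f2 f3).
Proof.
  intros Hs Hr H1 H2 H3 t Ht.
  pose proof (Fm3_pos f1 f2 f3). pose proof (bm3_pos a1 a2 a3 e1 e2 e3).
  assert (Hta : Rabs t <= Tm a1 a2 a3 e1 e2 e3 f1 f2 f3) by (rewrite Rabs_right; lra).
  assert (Hbox : forall i, Rabs (s * wsol a1 a2 a3 e1 e2 e3 f1 f2 f3 s u1 u2 u3 i t) < r).
  { intro i. rewrite Rabs_mult, Rabs_right by lra.
    pose proof (wsol_bound a1 a2 a3 e1 e2 e3 f1 f2 f3 s u1 u2 u3 i t ltac:(lra) H1 H2 H3 Hta). nra. }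
  assert (Hder : forall i, is_derive (fun t => s * wsol a1 a2 a3 e1 e2 e3 f1 f2 f3 s u1 u2 u3 i t) t
     (s * (wsol a1 a2 a3 e1 e2 e3 f1 f2 f3 s u1 u2 u3 i t *
       (sel f1 f2 f3 i + s * (beta a1 a2 a3 e1 e2 e3 i 1%nat * wsol a1 a2 a3 e1 e2 e3 f1 f2 f3 s u1 u2 u3 1%nat t
        + beta a1 a2 a3 e1 e2 e3 i 2%nat * wsol a1 a2 a3 e1 e2 e3 f1 f2 f3 s u1 u2 u3 2%nat t
        + beta a1 a2 a3 e1 e2 e3 i 3%nat * wsol a1 a2 a3 e1 e2 e3 f1 f2 f3 s u1 u2 u3 3%nat t))))).
  { intro i. apply is_derive_scal. unfold wsol.
    apply (deriv_w _ _ _ s (Fm3 f1 f2 f3) (bm3 a1 a2 a3 e1 e2 e3)); auto using Fm3_bound, bm3_bound, sel_bound; lra. }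
  split; [unfold in_box; repeat split; apply Hbox|].
  unfold field; cbv zeta.
  split; [|split]; (eapply is_derive_ext; [intro; reflexivity|]);
  match goal with |- is_derive _ _ ?v => idtac end;
  [ replace (s * wsol a1 a2 a3 e1 e2 e3 f1 f2 f3 s u1 u2 u3 1 t * _) with (s * (wsol a1 a2 a3 e1 e2 e3 f1 f2 f3 s u1 u2 u3 1 t *
       (sel f1 f2 f3 1 + s * (beta a1 a2 a3 e1 e2 e3 1 1%nat * wsol a1 a2 a3 e1 e2 e3 f1 f2 f3 s u1 u2 u3 1%nat t
        + beta a1 a2 a3 e1 e2 e3 1 2%nat * wsol a1 a2 a3 e1 e2 e3 f1 f2 f3 s u1 u2 u3 2%nat t
        + beta a1 a2 a3 e1 e2 e3 1 3%nat * wsol a1 a2 a3 e1 e2 e3 f1 f2 f3 s u1 u2 u3 3%nat t))))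
       by (simpl; ring); apply Hder
  | replace (s * wsol a1 a2 a3 e1 e2 e3 f1 f2 f3 s u1 u2 u3 2 t * _) with (s * (wsol a1 a2 a3 e1 e2 e3 f1 f2 f3 s u1 u2 u3 2 t *
       (sel f1 f2 f3 2 + s * (beta a1 a2 a3 e1 e2 e3 2 1%nat * wsol a1 a2 a3 e1 e2 e3 f1 f2 f3 s u1 u2 u3 1%nat t
        + beta a1 a2 a3 e1 e2 e3 2 2%nat * wsol a1 a2 a3 e1 e2 e3 f1 f2 f3 s u1 u2 u3 2%nat t
        + beta a1 a2 a3 e1 e2 e3 2 3%nat * wsol a1 a2 a3 e1 e2 e3 f1 f2 f3 s u1 u2 u3 3%nat t))))
       by (simpl; ring); apply Hder
  | replace (s * wsol a1 a2 a3 e1 e2 e3 f1 f2 f3 s u1 u2 u3 3 t * _) with (s * (wsol a1 a2 a3 e1 e2 e3 f1 f2 f3 s u1 u2 u3 3 t *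
       (sel f1 f2 f3 3 + s * (beta a1 a2 a3 e1 e2 e3 3 1%nat * wsol a1 a2 a3 e1 e2 e3 f1 f2 f3 s u1 u2 u3 1%nat t
        + beta a1 a2 a3 e1 e2 e3 3 2%nat * wsol a1 a2 a3 e1 e2 e3 f1 f2 f3 s u1 u2 u3 2%nat t
        + beta a1 a2 a3 e1 e2 e3 3 3%nat * wsol a1 a2 a3 e1 e2 e3 f1 f2 f3 s u1 u2 u3 3%nat t))))
       by (simpl; ring); apply Hder ].
Qed.


Lemma pow3_split (s x y z : R) n i j : (i <= n)%nat -> (j <= n - i)%nat ->
  (s * x) ^ i * (s * y) ^ j * (s * z) ^ (n - i - j) = s ^ n * (x ^ i * y ^ j * z ^ (n - i - j)).
Proof.
  intros Hi Hj. rewrite !Rpow_mult_distr.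
  replace (s ^ n) with (s ^ i * s ^ j * s ^ (n - i - j)) by (rewrite <- !pow_add; f_equal; lia).
  ring.
Qed.

Lemma psum3_homog c s x y z n :
  psum3 c (s * x) (s * y) (s * z) n = s ^ n * psum3 c x y z n.
Proof.
  unfold psum3. rewrite scal_sum. apply sum_eq. intros i Hi.
  rewrite (Rmult_comm (sum_f_R0 _ _) (s ^ n)), scal_sum. apply sum_eq. intros j Hj.
  transitivity (c i j (n - i - j)%nat * ((s*x)^i*(s*y)^j*(s*z)^(n-i-j))); [ring|]. rewrite pow3_split by lia. ring.
Qed.

Lemma psum3_abs_pos c x y z n : 0 <= psum3_abs c x y z n.
Proof.
  unfold psum3_abs. apply cond_pos_sum. intro i. apply cond_pos_sum. intro j. apply Rabs_pos.
Qed.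

Lemma psum3_bound c x y z rho t n : 0 <= t -> 0 <= rho ->
  Rabs x <= t * rho -> Rabs y <= t * rho -> Rabs z <= t * rho ->
  Rabs (psum3 c x y z n) <= t ^ n * psum3_abs c rho rho rho n.
Proof.
  intros Ht Hr Hx Hy Hz. unfold psum3, psum3_abs.
  eapply Rle_trans; [apply sum_f_R0_triangle|]. rewrite scal_sum. apply sum_Rle. intros i Hi.
  eapply Rle_trans; [apply sum_f_R0_triangle|]. rewrite Rmult_comm, scal_sum. apply sum_Rle. intros j Hj.
  set (k := (n - i - j)%nat).
  assert (Hk : (i + j + k = n)%nat) by (unfold k; lia).
  transitivity (Rabs (c i j k) * ((t*rho)^i*(t*rho)^j*(t*rho)^k)).
  - rewrite !Rabs_mult, <- !RPow_abs.
    pose proof (Rabs_pos (c i j k)).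
    assert (Hp : forall w l, Rabs w <= t * rho -> 0 <= Rabs w ^ l <= (t * rho) ^ l).
    { intros w l Hw. split; [apply pow_le, Rabs_pos|]. apply pow_incr; split; [apply Rabs_pos|auto]. }
    destruct (Hp x i Hx), (Hp y j Hy), (Hp z k Hz).
    rewrite !Rmult_assoc. apply Rmult_le_compat_l; auto.
    apply Rmult_le_compat; auto. apply Rmult_le_pos; auto.
    apply Rmult_le_compat; auto.
  - rewrite !Rpow_mult_distr. right.
    rewrite !Rabs_mult, <- !RPow_abs, (Rabs_right rho) by lra.
    rewrite <- Hk, !pow_add. ring.
Qed.

Lemma psum3_0 c x y z : psum3 c x y z 0 = c 0%nat 0%nat 0%nat.
Proof. unfold psum3. simpl. ring. Qed.

Lemma psum3_zero c x y z n :
  (forall i j, (i <= n)%nat -> (j <= n - i)%nat -> c i j (n - i - j)%nat = 0) ->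
  psum3 c x y z n = 0.
Proof.
  intro H. unfold psum3. apply sum_eq_R0. intros i Hi. apply sum_eq_R0. intros j Hj.
  rewrite H by auto. ring.
Qed.

Lemma sum_low (P : nat -> R) m : (forall n, (1 <= n)%nat -> (n < m)%nat -> P n = 0) ->
  (1 <= m)%nat -> sum_f_R0 P m = P 0%nat + P m.
Proof.
  intros H Hm.
  assert (L : forall k, (k < m)%nat -> sum_f_R0 P k = P 0%nat).
  { induction k as [|k IH]; intro Hk; [reflexivity|]. simpl. rewrite IH by lia. rewrite (H (S k)) by lia. ring. }
  destruct m as [|m]; [lia|]. simpl. rewrite L by lia. reflexivity.
Qed.

Lemma tail_bound (Ia : R) (P Pa : nat -> R) m t :
  (1 <= m)%nat -> 0 < t <= 1 ->
  is_series P Ia -> ex_series Pa ->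
  (forall n, 0 <= Pa n) ->
  (forall n, Rabs (P n) <= t ^ n * Pa n) ->
  (forall n, (1 <= n)%nat -> (n < m)%nat -> P n = 0) ->
  Rabs (Ia - P 0%nat - P m) <= t ^ (S m) * Series Pa.
Proof.
  intros Hm Ht HP HPa Hpos Hb Hz.
  assert (Hs : is_series (fun k => P (S m + k)%nat) (Ia - sum_f_R0 P m)).
  { apply is_series_incr_n; [lia|]. simpl pred. rewrite sum_n_Reals.
    match goal with |- is_series _ ?L => replace L with Ia; [exact HP|] end.
    cbn. ring. }
  rewrite sum_low in Hs by auto.
  replace (Ia - P 0%nat - P m) with (Ia - (P 0%nat + P m)) by ring.
  rewrite <- (is_series_unique _ _ Hs).
  assert (Hpa' : ex_series (fun k => Pa (S m + k)%nat)) by (apply ex_series_incr_n; auto).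
  assert (Hb' : forall k, Rabs (P (S m + k)%nat) <= t ^ (S m) * Pa (S m + k)%nat).
  { intro k. eapply Rle_trans; [apply Hb|]. apply Rmult_le_compat_r; [auto|].
    rewrite pow_add. rewrite <- (Rmult_1_r (t ^ S m)) at 2. apply Rmult_le_compat_l.
    apply pow_le; lra. rewrite <- (pow1 k). apply pow_incr; lra. }
  assert (Hg : ex_series (fun k => Pa (S m + k)%nat * t ^ S m)) by (apply ex_series_scal_r; auto).
  eapply Rle_trans; [apply Series_Rabs|].
  { eapply (@ex_series_le R_AbsRing R_CompleteNormedModule); [|exact Hg].
    intro n. change (norm (Rabs (P (S m + n)%nat))) with (Rabs (Rabs (P (S m + n)%nat))).
    rewrite Rabs_Rabsolu, Rmult_comm. apply Hb'. }
  eapply Rle_trans; [apply Series_le; [|exact Hg]|].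
  - intro n. split; [apply Rabs_pos|]. rewrite Rmult_comm. apply Hb'.
  - rewrite (Series_ext _ (fun k => t ^ S m * Pa (S m + k)%nat)) by (intro; ring).
    rewrite Series_scal_l. apply Rmult_le_compat_l; [apply pow_le; lra|].
    rewrite (Series_incr_n Pa (S m)) by (auto; lia).
    assert (0 <= sum_f_R0 Pa (pred (S m))) by (apply cond_pos_sum; auto). lra.
Qed.


Definition cont3 (G : R -> R -> R -> R) (v1 v2 v3 : R) :=
  forall eps, 0 < eps -> exists del, 0 < del /\ forall x y z,
    Rabs (x - v1) < del -> Rabs (y - v2) < del -> Rabs (z - v3) < del ->
    Rabs (G x y z - G v1 v2 v3) < eps.

Lemma cont3_const k v1 v2 v3 : cont3 (fun _ _ _ => k) v1 v2 v3.
Proof. intros eps He. exists 1. split; [lra|]. intros. rewrite Rminus_diag, Rabs_R0. lra. Qed.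
Lemma cont3_x v1 v2 v3 : cont3 (fun x _ _ => x) v1 v2 v3.
Proof. intros eps He. exists eps. split; [lra|]. intros. auto. Qed.
Lemma cont3_y v1 v2 v3 : cont3 (fun _ y _ => y) v1 v2 v3.
Proof. intros eps He. exists eps. split; [lra|]. intros. auto. Qed.
Lemma cont3_z v1 v2 v3 : cont3 (fun _ _ z => z) v1 v2 v3.
Proof. intros eps He. exists eps. split; [lra|]. intros. auto. Qed.

Lemma cont3_plus G H v1 v2 v3 : cont3 G v1 v2 v3 -> cont3 H v1 v2 v3 ->
  cont3 (fun x y z => G x y z + H x y z) v1 v2 v3.
Proof.
  intros HG HH eps He.
  destruct (HG (eps/2) ltac:(lra)) as [d1 [Hd1 H1]].
  destruct (HH (eps/2) ltac:(lra)) as [d2 [Hd2 H2]].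
  exists (Rmin d1 d2). split; [apply Rmin_pos; auto|]. intros x y z Hx Hy Hz.
  pose proof (Rmin_l d1 d2). pose proof (Rmin_r d1 d2).
  specialize (H1 x y z ltac:(lra) ltac:(lra) ltac:(lra)).
  specialize (H2 x y z ltac:(lra) ltac:(lra) ltac:(lra)).
  replace (G x y z + H x y z - (G v1 v2 v3 + H v1 v2 v3)) with
    ((G x y z - G v1 v2 v3) + (H x y z - H v1 v2 v3)) by ring.
  eapply Rle_lt_trans; [apply Rabs_triang|]. lra.
Qed.

Lemma cont3_mult G H v1 v2 v3 : cont3 G v1 v2 v3 -> cont3 H v1 v2 v3 ->
  cont3 (fun x y z => G x y z * H x y z) v1 v2 v3.
Proof.
  intros HG HH eps He.
  set (K := Rabs (G v1 v2 v3) + Rabs (H v1 v2 v3) + 1).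
  assert (HK : 1 <= K) by (unfold K; pose proof (Rabs_pos (G v1 v2 v3)); pose proof (Rabs_pos (H v1 v2 v3)); lra).
  set (e := Rmin 1 (eps / K)).
  assert (He0 : 0 < e) by (apply Rmin_pos; [lra|apply Rdiv_lt_0_compat; lra]).
  assert (He1 : e <= 1) by apply Rmin_l.
  assert (He2 : e * K <= eps).
  { unfold e. apply (Rmult_le_reg_r (/ K)). apply Rinv_0_lt_compat; lra.
    rewrite Rmult_assoc, Rinv_r, Rmult_1_r by lra. apply Rmin_r. }
  destruct (HG e He0) as [d1 [Hd1 H1]].
  destruct (HH e He0) as [d2 [Hd2 H2]].
  exists (Rmin d1 d2). split; [apply Rmin_pos; auto|]. intros x y z Hx Hy Hz.
  pose proof (Rmin_l d1 d2). pose proof (Rmin_r d1 d2).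
  specialize (H1 x y z ltac:(lra) ltac:(lra) ltac:(lra)).
  specialize (H2 x y z ltac:(lra) ltac:(lra) ltac:(lra)).
  set (g := G x y z) in *. set (g0 := G v1 v2 v3) in *.
  set (h := H x y z) in *. set (h0 := H v1 v2 v3) in *.
  replace (g * h - g0 * h0) with ((g - g0) * h + g0 * (h - h0)) by ring.
  eapply Rle_lt_trans; [apply Rabs_triang|]. rewrite !Rabs_mult.
  assert (Hh : Rabs h <= Rabs h0 + 1).
  { replace h with (h0 + (h - h0)) by ring. eapply Rle_trans; [apply Rabs_triang|]. lra. }
  assert (A1 : Rabs (g - g0) * Rabs h <= Rabs (g - g0) * (Rabs h0 + 1)) by (apply Rmult_le_compat_l; [apply Rabs_pos|auto]).
  assert (A2 : Rabs (g - g0) * (Rabs h0 + 1) < e * (Rabs h0 + 1)) by (apply Rmult_lt_compat_r; [pose proof (Rabs_pos h0); lra|auto]).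
  assert (A3 : Rabs g0 * Rabs (h - h0) <= Rabs g0 * e) by (apply Rmult_le_compat_l; [apply Rabs_pos|lra]).
  assert (E : e * (Rabs h0 + 1) + Rabs g0 * e = e * K) by (unfold K; fold g0 h0; ring).
  lra.
Qed.

Lemma cont3_pow G v1 v2 v3 n : cont3 G v1 v2 v3 -> cont3 (fun x y z => G x y z ^ n) v1 v2 v3.
Proof.
  intro HG. induction n as [|n IH]; simpl.
  - apply cont3_const.
  - apply cont3_mult; auto.
Qed.

Lemma cont3_sum (G : nat -> R -> R -> R -> R) v1 v2 v3 n :
  (forall i, (i <= n)%nat -> cont3 (G i) v1 v2 v3) ->
  cont3 (fun x y z => sum_f_R0 (fun i => G i x y z) n) v1 v2 v3.
Proof.
  induction n as [|n IH]; intro H; simpl.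
  - apply H; lia.
  - apply (cont3_plus (fun x y z => sum_f_R0 (fun i => G i x y z) n) (G (S n))).
    + apply IH. intros; apply H; lia.
    + apply H; lia.
Qed.

Lemma cont3_psum3 c m v1 v2 v3 : cont3 (fun x y z => psum3 c x y z m) v1 v2 v3.
Proof.
  unfold psum3. apply (cont3_sum (fun i x y z => sum_f_R0 (fun j => c i j (m - i - j)%nat * x ^ i * y ^ j * z ^ (m - i - j)) (m - i))).
  intros i Hi. apply (cont3_sum (fun j x y z => c i j (m - i - j)%nat * x ^ i * y ^ j * z ^ (m - i - j))).
  intros j Hj.
  apply (cont3_mult (fun x y z => c i j (m - i - j)%nat * x ^ i * y ^ j) (fun x y z => z ^ (m - i - j))).
  2:{ apply (cont3_pow (fun x y z => z)). apply cont3_z. }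
  apply (cont3_mult (fun x y z => c i j (m - i - j)%nat * x ^ i) (fun x y z => y ^ j)).
  2:{ apply (cont3_pow (fun x y z => y)). apply cont3_y. }
  apply (cont3_mult (fun x y z => c i j (m - i - j)%nat) (fun x y z => x ^ i)).
  apply cont3_const. apply (cont3_pow (fun x y z => x)). apply cont3_x.
Qed.

Lemma poly1_zero n : forall (a : nat -> R) del, 0 < del ->
  (forall x, 0 < Rabs x < del -> sum_f_R0 (fun i => a i * x ^ i) n = 0) ->
  forall i, (i <= n)%nat -> a i = 0.
Proof.
  induction n as [|n IH]; intros a del Hd H i Hi.
  - assert (i = 0)%nat by lia. subst.
    specialize (H (del/2)). simpl in H. rewrite Rabs_right in H by lra.
    specialize (H ltac:(lra)). lra.
  - set (Q := fun x => sum_f_R0 (fun i => a (S i) * x ^ i) n).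
    assert (Hdec : forall x, sum_f_R0 (fun i => a i * x ^ i) (S n) = a 0%nat + x * Q x).
    { intro x. rewrite decomp_sum by lia. simpl pred. unfold Q. rewrite scal_sum. simpl.
      rewrite Rmult_1_r. f_equal. apply sum_eq. intros. simpl. ring. }
    set (K := sum_f_R0 (fun i => Rabs (a (S i))) n).
    assert (HK : 0 <= K) by (apply cond_pos_sum; intro; apply Rabs_pos).
    assert (HQ : forall x, Rabs x <= 1 -> Rabs (Q x) <= K).
    { intros x Hx. unfold Q, K. eapply Rle_trans; [apply sum_f_R0_triangle|]. apply sum_Rle.
      intros k Hk. rewrite Rabs_mult, <- RPow_abs.
      rewrite <- (Rmult_1_r (Rabs (a (S k)))) at 2. apply Rmult_le_compat_l; [apply Rabs_pos|].
      rewrite <- (pow1 k). apply pow_incr. split; [apply Rabs_pos|auto]. }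
    assert (Ha0 : a 0%nat = 0).
    { destruct (Req_dec (a 0%nat) 0) as [E|E]; auto. exfalso.
      assert (Hp : 0 < Rabs (a 0%nat)) by (apply Rabs_pos_lt; auto).
      set (x := Rmin (Rmin (del/2) (1/2)) (Rabs (a 0%nat) / (2 * (K + 1)))).
      assert (Hx0 : 0 < x). { unfold x. repeat apply Rmin_pos; try lra. apply Rdiv_lt_0_compat; lra. }
      assert (Hx1 : x <= del/2) by (unfold x; eapply Rle_trans; [apply Rmin_l|apply Rmin_l]).
      assert (Hx2 : x <= 1/2) by (unfold x; eapply Rle_trans; [apply Rmin_l|apply Rmin_r]).
      assert (Hx3 : x <= Rabs (a 0%nat) / (2 * (K + 1))) by (unfold x; apply Rmin_r).
      assert (Hx3' : x * (2 * (K + 1)) <= Rabs (a 0%nat)).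
      { apply (Rmult_le_compat_r (2 * (K + 1))) in Hx3; [|lra].
        unfold Rdiv in Hx3. rewrite Rmult_assoc, Rinv_l, Rmult_1_r in Hx3 by lra. exact Hx3. }
      specialize (H x). rewrite Hdec in H. rewrite Rabs_right in H by lra. specialize (H ltac:(lra)).
      assert (Hq : Rabs (Q x) <= K) by (apply HQ; rewrite Rabs_right; lra).
      assert (E2 : a 0%nat = - (x * Q x)) by lra.
      rewrite E2, Rabs_Ropp, Rabs_mult, Rabs_right in Hp by lra.
      rewrite E2, Rabs_Ropp, Rabs_mult, Rabs_right in Hx3' by lra.
      assert (x * Rabs (Q x) <= x * K) by (apply Rmult_le_compat_l; lra).
      nra. }
    destruct i as [|i]; auto.
    apply (IH (fun i => a (S i)) del Hd); [|lia].
    intros x Hx. specialize (H x Hx). rewrite Hdec, Ha0 in H. fold (Q x).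
    assert (x <> 0). { intro E; subst. rewrite Rabs_R0 in Hx. lra. }
    apply (Rmult_eq_reg_l x); [|auto]. lra.
Qed.

Lemma poly3_zero c m del : 0 < del ->
  (forall x y z, Rabs x < del -> Rabs y < del -> Rabs z < del -> psum3 c x y z m = 0) ->
  forall i j, (i <= m)%nat -> (j <= m - i)%nat -> c i j (m - i - j)%nat = 0.
Proof.
  intros Hd H.
  assert (H1 : forall y z, Rabs y < del -> Rabs z < del -> forall i, (i <= m)%nat ->
     sum_f_R0 (fun j => c i j (m - i - j)%nat * y ^ j * z ^ (m - i - j)) (m - i) = 0).
  { intros y z Hy Hz. apply (poly1_zero m _ del Hd). intros x Hx.
    rewrite <- (H x y z ltac:(lra) Hy Hz). unfold psum3. apply sum_eq. intros i Hi.
    rewrite Rmult_comm, scal_sum. apply sum_eq. intros j Hj. ring. }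
  intros i j Hi Hj.
  set (z := del / 2).
  assert (Hz : Rabs z < del) by (unfold z; rewrite Rabs_right; lra).
  assert (H2 : forall j, (j <= m - i)%nat -> c i j (m - i - j)%nat * z ^ (m - i - j) = 0).
  { apply (poly1_zero (m - i) _ del Hd). intros y Hy.
    rewrite <- (H1 y z ltac:(lra) Hz i Hi). apply sum_eq. intros k Hk. ring. }
  specialize (H2 j Hj).
  apply Rmult_integral in H2. destruct H2 as [H2|H2]; auto.
  exfalso. apply (pow_nonzero z (m - i - j)); auto. unfold z; lra.
Qed.


Lemma min_exists (P : nat -> Prop) n : P n -> exists m, P m /\ forall k, (k < m)%nat -> ~ P k.
Proof.
  induction n as [n IH] using (well_founded_induction Wf_nat.lt_wf). intro Hn.
  destruct (classic (exists k, (k < n)%nat /\ P k)) as [[k [Hk Pk]]|Hno].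
  - apply (IH k Hk Pk).
  - exists n. split; auto. intros k Hk Pk. apply Hno. exists k. auto.
Qed.

Lemma exp_pow x n : exp x ^ n = exp (INR n * x).
Proof.
  induction n as [|n IH]; simpl pow.
  - simpl. rewrite Rmult_0_l, exp_0. reflexivity.
  - rewrite IH, <- exp_plus, S_INR. f_equal. ring.
Qed.

Lemma series_const0 (P : nat -> R) l : is_series P l -> (forall n, (1 <= n)%nat -> P n = 0) -> l = P 0%nat.
Proof.
  intros H Hz. rewrite <- (is_series_unique _ _ H).
  rewrite Series_incr_1 by (eexists; exact H).
  rewrite (Series_ext (fun k => P (S k)) (fun k => 0 * 1)).
  2:{ intro n. rewrite (Hz (S n)) by lia. simpl. lra. }
  rewrite Series_scal_l, Rmult_0_l, Rplus_0_r. reflexivity.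
Qed.

Lemma small_zero a : (forall eps, 0 < eps -> Rabs a < 2 * eps) -> a = 0.
Proof.
  intro H. destruct (Req_dec a 0) as [E|E]; auto. exfalso.
  assert (Hp : 0 < Rabs a) by (apply Rabs_pos_lt; auto).
  specialize (H (Rabs a / 2) ltac:(lra)). lra.
Qed.

Theorem theorem2 (a1 a2 a3 e1 e2 e3 f1 f2 f3 : R) :
  (exists (I : R -> R -> R -> R) (r : R),
      analytic_on_box I r /\
      first_integral_on_box a1 a2 a3 e1 e2 e3 f1 f2 f3 r I /\
      nonconstant_on_box I r) ->
  exists n1 n2 n3 : nat, (0 < n1 + n2 + n3)%nat /\
    INR n1 * f1 + INR n2 * f2 + INR n3 * f3 = 0.
Proof.
  intros [I [r [[Hr [c Hc]] [Hfi [x0 [y0 [z0 [x1 [y1 [z1 [Hb0 [Hb1 Hne]]]]]]]]]]]].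
  assert (Hex : exists i j k, (1 <= i + j + k)%nat /\ c i j k <> 0).
  { apply NNPP. intro Hno.
    assert (Hz : forall i j k, (1 <= i+j+k)%nat -> c i j k = 0).
    { intros i j k Hijk. apply NNPP. intro Hc0. apply Hno. exists i, j, k. auto. }
    assert (Hconst : forall x y z, in_box r x y z -> I x y z = c 0%nat 0%nat 0%nat).
    { intros x y z Hb. destruct (Hc x y z Hb) as [_ Hs].
      rewrite (series_const0 _ _ Hs). apply psum3_0.
      intros n Hn. apply psum3_zero. intros i j Hi Hj. apply Hz. lia. }
    apply Hne. rewrite (Hconst _ _ _ Hb0), (Hconst _ _ _ Hb1). reflexivity. }
  destruct Hex as [i0 [j0 [k0 [Hijk Hc0]]]].
  set (Pd := fun m => (1 <= m)%nat /\ exists i j, (i <= m)%nat /\ (j <= m - i)%nat /\ c i j (m - i - j)%nat <> 0).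
  destruct (min_exists Pd (i0+j0+k0)) as [m [[Hm1 [i [j [Hi [Hj Hcij]]]]] Hmin]].
  { split; auto. exists i0, j0. split; [lia|split; [lia|]]. replace (i0+j0+k0-i0-j0)%nat with k0 by lia. auto. }
  assert (Hlow : forall x y z n, (1 <= n)%nat -> (n < m)%nat -> psum3 c x y z n = 0).
  { intros x y z n Hn1 Hnm. apply psum3_zero. intros i' j' Hi' Hj'.
    apply NNPP. intro Hne'. apply (Hmin n Hnm). split; auto. exists i', j'. auto. }
  set (rho := r / 2).
  assert (Hrho : 0 < rho) by (unfold rho; lra).
  assert (Hbrho : in_box r rho rho rho) by (unfold in_box, rho; rewrite Rabs_right by lra; lra).
  destruct (Hc rho rho rho Hbrho) as [HexA _].
  set (Sa := Series (psum3_abs c rho rho rho)).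
  set (T := Tm a1 a2 a3 e1 e2 e3 f1 f2 f3).
  assert (HT : 0 < T) by apply Tm_pos.
  assert (Hinv : forall u1 u2 u3, Rabs u1 < 1 -> Rabs u2 < 1 -> Rabs u3 < 1 ->
      psum3 c (u1 * exp (f1 * T)) (u2 * exp (f2 * T)) (u3 * exp (f3 * T)) m = psum3 c u1 u2 u3 m).
  { intros u1 u2 u3 Hu1 Hu2 Hu3.
    apply Rminus_diag_uniq. apply small_zero. intros eps Heps.
    destruct (cont3_psum3 c m (u1 * exp (f1 * T)) (u2 * exp (f2 * T)) (u3 * exp (f3 * T)) eps Heps)
      as [del [Hdel Hcont]].
    set (K := 2 * (2 / rho) ^ (S m) * Rabs Sa + 1).
    assert (HK : 1 <= K).
    { unfold K. assert (0 <= 2 * (2 / rho) ^ (S m) * Rabs Sa); [|lra].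
      apply Rmult_le_pos; [apply Rmult_le_pos; [lra|apply pow_le; unfold Rdiv; apply Rmult_le_pos; [lra|left; apply Rinv_0_lt_compat; lra]]|apply Rabs_pos]. }
    set (s := Rmin (Rmin 1 (r/4)) (Rmin (del/4) (eps/K))).
    assert (Hs0 : 0 < s).
    { unfold s. repeat apply Rmin_pos; try lra. apply Rdiv_lt_0_compat; lra. }
    assert (Hs1 : s <= 1) by (unfold s; eapply Rle_trans; [apply Rmin_l|apply Rmin_l]).
    assert (Hs2 : s <= r/4) by (unfold s; eapply Rle_trans; [apply Rmin_l|apply Rmin_r]).
    assert (Hs3 : s <= del/4) by (unfold s; eapply Rle_trans; [apply Rmin_r|apply Rmin_l]).
    assert (Hs4 : s * K <= eps).
    { assert (s <= eps / K) by (unfold s; eapply Rle_trans; [apply Rmin_r|apply Rmin_r]).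
      apply (Rmult_le_compat_r K) in H; [|lra]. unfold Rdiv in H.
      rewrite Rmult_assoc, Rinv_l, Rmult_1_r in H by lra. exact H. }
    assert (Hu1' : Rabs u1 <= 1) by lra. assert (Hu2' : Rabs u2 <= 1) by lra. assert (Hu3' : Rabs u3 <= 1) by lra.
    pose proof (wsol_solution a1 a2 a3 e1 e2 e3 f1 f2 f3 r s u1 u2 u3 ltac:(lra) ltac:(lra) Hu1' Hu2' Hu3') as Hsol.
    pose proof (Hfi _ _ _ 0 T (Rlt_le _ _ HT) Hsol) as HI. cbv beta in HI.
    rewrite !wsol_0 in HI. cbn [sel] in HI.
    set (w := fun i => wsol a1 a2 a3 e1 e2 e3 f1 f2 f3 s u1 u2 u3 i T) in *.
    change (wsol a1 a2 a3 e1 e2 e3 f1 f2 f3 s u1 u2 u3 1%nat T) with (w 1%nat) in HI.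
    change (wsol a1 a2 a3 e1 e2 e3 f1 f2 f3 s u1 u2 u3 2%nat T) with (w 2%nat) in HI.
    change (wsol a1 a2 a3 e1 e2 e3 f1 f2 f3 s u1 u2 u3 3%nat T) with (w 3%nat) in HI.
    assert (Hw : forall i, Rabs (w i) <= 2).
    { intro i'. unfold w. apply wsol_bound; auto. lra. rewrite Rabs_right; fold T; lra. }
    assert (Hwa : forall i, Rabs (w i - sel u1 u2 u3 i * exp (sel f1 f2 f3 i * T)) <= 2 * s).
    { intro i'. unfold w, T. apply wsol_approx; auto; lra. }
    set (t := 2 * s / rho).
    assert (Htr : t * rho = 2 * s) by (unfold t; field; lra).
    assert (Ht0 : 0 < t) by (unfold t; apply Rdiv_lt_0_compat; lra).
    assert (Ht1 : t <= 1) by (unfold t, rho; apply (Rmult_le_reg_r (r/2)); [lra|]; unfold Rdiv; field_simplify; lra).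
    assert (HP : forall x y z, Rabs x <= 2 * s -> Rabs y <= 2 * s -> Rabs z <= 2 * s ->
        Rabs (I x y z - psum3 c x y z 0 - psum3 c x y z m) <= t ^ (S m) * Sa).
    { intros x y z Hx Hy Hz. apply tail_bound.
      - exact Hm1.
      - lra.
      - apply (Hc x y z). unfold in_box. repeat split; lra.
      - exact HexA.
      - intro n. apply psum3_abs_pos.
      - intro n. apply psum3_bound; lra.
      - intros n Hn1 Hn2. apply Hlow; auto. }
    assert (Hsu : forall u, Rabs u <= 1 -> Rabs (s * u) <= 2 * s).
    { intros u Hu. rewrite Rabs_mult, Rabs_right by lra. nra. }
    assert (Hsw : forall i, Rabs (s * w i) <= 2 * s).
    { intros i'. rewrite Rabs_mult, Rabs_right by lra. specialize (Hw i'). nra. }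
    pose proof (HP _ _ _ (Hsu u1 Hu1') (Hsu u2 Hu2') (Hsu u3 Hu3')) as TB1.
    pose proof (HP _ _ _ (Hsw 1%nat) (Hsw 2%nat) (Hsw 3%nat)) as TB2.
    rewrite !psum3_0, psum3_homog in TB1, TB2.
    rewrite HI in TB1.
    set (A := psum3 c u1 u2 u3 m) in *.
    set (Bw := psum3 c (w 1%nat) (w 2%nat) (w 3%nat) m) in *.
    set (Iw := I (s * w 1%nat) (s * w 2%nat) (s * w 3%nat)) in *.
    assert (Hsm : 0 < s ^ m) by (apply pow_lt; lra).
    assert (Et : t ^ (S m) = s ^ m * (s * (2 / rho) ^ (S m))).
    { unfold t. unfold Rdiv. rewrite <- Rmult_assoc. rewrite (Rmult_comm 2 s), Rmult_assoc, Rpow_mult_distr.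
      simpl pow. ring. }
    assert (HAB : s ^ m * Rabs (A - Bw) <= s ^ m * (s * (K - 1))).
    { replace (s ^ m * Rabs (A - Bw)) with (Rabs (s ^ m * A - s ^ m * Bw)).
      2:{ rewrite <- Rmult_minus_distr_l, Rabs_mult, Rabs_right by lra. reflexivity. }
      replace (s ^ m * A - s ^ m * Bw) with
        (- (Iw - c 0%nat 0%nat 0%nat - s ^ m * A) + (Iw - c 0%nat 0%nat 0%nat - s ^ m * Bw)) by ring.
      eapply Rle_trans; [apply Rabs_triang|]. rewrite Rabs_Ropp.
      assert (t ^ S m * Sa <= t ^ S m * Rabs Sa) by (apply Rmult_le_compat_l; [apply pow_le; lra|apply Rle_abs]).
      unfold K. rewrite Et in *. nra. }
    apply Rmult_le_reg_l in HAB; auto.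
    assert (HBv : Rabs (Bw - psum3 c (u1 * exp (f1 * T)) (u2 * exp (f2 * T)) (u3 * exp (f3 * T)) m) < eps).
    { apply Hcont.
      - pose proof (Hwa 1%nat). cbn [sel] in H. lra.
      - pose proof (Hwa 2%nat). cbn [sel] in H. lra.
      - pose proof (Hwa 3%nat). cbn [sel] in H. lra. }
    replace (psum3 c (u1 * exp (f1 * T)) (u2 * exp (f2 * T)) (u3 * exp (f3 * T)) m - A) with
      (- (Bw - psum3 c (u1 * exp (f1 * T)) (u2 * exp (f2 * T)) (u3 * exp (f3 * T)) m) + (Bw - A)) by ring.
    eapply Rle_lt_trans; [apply Rabs_triang|]. rewrite Rabs_Ropp.
    rewrite Rabs_minus_sym in HAB. nra. }
  set (d := fun i j k => c i j k * (exp ((INR i * f1 + INR j * f2 + INR k * f3) * T) - 1)).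
  assert (Hd : forall u1 u2 u3, Rabs u1 < 1 -> Rabs u2 < 1 -> Rabs u3 < 1 -> psum3 d u1 u2 u3 m = 0).
  { intros u1 u2 u3 Hu1 Hu2 Hu3. rewrite <- (Rminus_diag_eq _ _ (Hinv u1 u2 u3 Hu1 Hu2 Hu3)).
    unfold psum3. rewrite <- minus_sum. apply sum_eq. intros i' Hi'.
    rewrite <- minus_sum. apply sum_eq. intros j' Hj'. unfold d.
    rewrite !Rpow_mult_distr, !exp_pow.
    replace ((INR i' * f1 + INR j' * f2 + INR (m - i' - j') * f3) * T) with
      (INR i' * (f1 * T) + INR j' * (f2 * T) + INR (m - i' - j') * (f3 * T)) by ring.
    rewrite !exp_plus. ring. }
  pose proof (poly3_zero d m 1 Rlt_0_1 Hd i j Hi Hj) as H0.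
  unfold d in H0. apply Rmult_integral in H0. destruct H0 as [H0|H0]; [contradiction|].
  assert (E : exp ((INR i * f1 + INR j * f2 + INR (m - i - j) * f3) * T) = exp 0) by (rewrite exp_0; lra).
  apply exp_inv in E.
  exists i, j, (m - i - j)%nat. split; [lia|].
  apply Rmult_integral in E. destruct E as [E|E]; [exact E|lra].
Qed.
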